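(* Let $n>24$, $0<\epsilon<\frac13$, $\delta>0$, and $m=\epsilon^{-2}n^{1+\delta}$ (assumed to be an integer). Then $$\mathsf P\left\{\left|\sum_{i=1}^n \frac{k_i(x)(k_i(x)-1)}{m(m-1)}\cdot\frac{1}{\|p\|^2}-1\right|\le 22\,\epsilon\right\}\ \ge\ 1-\frac{10}{9}e^{-n^{\delta}}.$$
   Context: Standing setup: $U$ is a finite set (the key space) with a probability measure $q$; $T=\{1,\dots,n\}$; $h:U\to T$ is an arbitrary function. $p_i=\sum_{u\in h^{-1}(i)}q(u)$ and $\|p\|^2=\sum_{i=1}^n p_i^2$. $U^m$ carries the product measure $q^m$, and $\mathsf P$ denotes probability under $q^m$ of the event for $x=(x_1,\dots,x_m)\in U^m$. $k_i(x)=|\{j: h(x_j)=i\}|$. *)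

(* Defs.v *)
From HB Require Import structures.
From mathcomp Require Import all_boot all_order all_algebra.
From mathcomp Require Import reals sequences exp.
Set Implicit Arguments. Unset Strict Implicit. Unset Printing Implicit Defensive.
Import Order.TTheory GRing.Theory Num.Theory.
Local Open Scope ring_scope.

Section HashDefs.
Variables (R : realType) (U : finType) (q : U -> R) (n : nat) (h : U -> 'I_n).

Definition pmass (i : 'I_n) : R := \sum_(u | h u == i) q u.

Definition pnorm2 : R := \sum_(i < n) pmass i ^+ 2.

Definition kcount (m : nat) (x : {ffun 'I_m -> U}) (i : 'I_n) : nat :=
  #|[set j : 'I_m | h (x j) == i]|.

Definition prodprob (m : nat) (E : pred {ffun 'I_m -> U}) : R :=
  \sum_(x : {ffun 'I_m -> U} | E x) \prod_(j < m) q (x j).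
End HashDefs.

(* Main.v *)
Require Import Defs.
From HB Require Import structures.
From mathcomp Require Import all_boot all_order all_algebra.
From mathcomp Require Import reals sequences exp.
From mathcomp Require Import ring lra.
Import Order.TTheory GRing.Theory Num.Theory.
Local Open Scope ring_scope.

Section Aux.
Variable R : realType.

Lemma expR_inv_le (z : R) : z < 1 -> expR z <= (1 - z)^-1.
Proof.
move=> z1; have hpos : 0 < 1 - z by rewrite subr_gt0.
rewrite -[expR z]invrK -expRN lef_pV2 ?posrE ?expR_gt0 //.
by have := expR_ge1Dx (- z).
Qed.

Lemma expR_sq_half (b : R) : 0 <= 1 + b / 2 -> (1 + b / 2) ^+ 2 <= expR b.
Proof.
move=> hb.
have -> : expR b = expR (b / 2) ^+ 2 by rewrite -expRM_natl; congr expR; field.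
rewrite ler_sqr ?nnegrE ?expR_ge0 //.
by have := expR_ge1Dx (b / 2).
Qed.

Lemma cosh_small (b z : R) : 0 <= b -> b <= 3/2 -> z * (5 + b) = b ^+ 2 ->
  expR z <= (expR b + expR (- b)) / 2.
Proof.
move=> b0 bs hz.
have h5 : 0 < 5 + b by lra.
have hb2 : b ^+ 2 <= 9/4.
  have : b * b <= (3/2) * (3/2) by apply: ler_pM.
  rewrite expr2; lra.
have z1 : z < 1.
  by rewrite -(ltr_pM2r h5) hz mul1r; lra.
apply: (le_trans (@expR_inv_le z z1)).
have e1 := @expR_sq_half b ltac:(lra).
have e2 := @expR_sq_half (-b) ltac:(lra).
have hpos : 0 < 1 - z by rewrite subr_gt0.
apply: (@le_trans _ _ (1 + b ^+ 2 / 4)).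
  rewrite -(ler_pM2l hpos) mulfV ?gt_eqF // -subr_ge0.
  have key : ((1 - z) * (1 + b ^+ 2 / 4) - 1) * (5 + b) = b ^+ 2 * (1 + b - b ^+ 2) / 4.
    have -> : ((1 - z) * (1 + b ^+ 2 / 4) - 1) * (5 + b) =
       (5 + b) * (b ^+ 2 / 4) - (z * (5 + b)) * (1 + b ^+ 2 / 4) by ring.
    by rewrite hz; field.
  have hk : 0 <= b ^+ 2 * (1 + b - b ^+ 2) / 4.
    apply: divr_ge0 => //; apply: mulr_ge0; first exact: sqr_ge0.
    have : b * (1 - b) >= b * (- 1/2) by apply: ler_wpM2l => //; lra.
    rewrite expr2; lra.
  by move: hk; rewrite -key pmulr_lge0.
have : ((1 + b / 2) ^+ 2 + (1 + - b / 2) ^+ 2) / 2 = 1 + b ^+ 2 / 4 by field.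
lra.
Qed.

Lemma cosh_large (b z : R) : 3/2 <= b -> z * (5 + b) = b ^+ 2 ->
  expR z <= (expR b + expR (- b)) / 2.
Proof.
move=> bl hz.
have h5 : 0 < 5 + b by lra.
have e2 := expR_ge0 (- b).
have hbz : 1 <= b - z.
  rewrite -subr_ge0 -(pmulr_lge0 _ h5).
  have -> : (b - z - 1) * (5 + b) = 5 * b + b ^+ 2 - z * (5 + b) - 5 - b by ring.
  rewrite hz; lra.
have ee : 2 <= expR (b - z) by have := expR_ge1Dx (b - z); have := expR_ge1Dx 1; lra.
have eb : expR b = expR (b - z) * expR z by rewrite -expRD subrK.
have : 2 * expR z <= expR (b - z) * expR z by rewrite ler_wpM2r ?expR_ge0.
move: eb e2; generalize (expR b) (expR (- b)) (expR (b - z) * expR z) (expR z) => A B C D.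
move=> -> *; lra.
Qed.

Lemma cosh_lb_pos (b : R) : 0 <= b -> expR (b ^+ 2 / (5 + b)) <= (expR b + expR (- b)) / 2.
Proof.
move=> b0.
have h5 : 0 < 5 + b by lra.
have hz : b ^+ 2 / (5 + b) * (5 + b) = b ^+ 2 by rewrite mulfVK ?gt_eqF.
have [bs|bl] := leP b (3/2).
  exact: cosh_small.
by apply: cosh_large => //; apply: ltW.
Qed.

Lemma cosh_lb (a : R) : expR (a ^+ 2 / (5 + `|a|)) <= (expR a + expR (- a)) / 2.
Proof.
have [a0|a0] := leP 0 a.
  by rewrite ger0_norm //; apply: cosh_lb_pos.
have := @cosh_lb_pos (- a) ltac:(lra).
by rewrite opprK sqrrN [in X in _ <= X]addrC ltr0_norm.
Qed.
Lemma expR_quad (g y : R) : 1 < g -> g * y <= g - 1 -> expR y <= 1 + y + g * y ^+ 2.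
Proof.
move=> g1 hy.
have g0 : 0 < g by apply: lt_trans g1.
have y1 : y < 1.
  have : g * y < g * 1 by rewrite mulr1; apply: (le_lt_trans hy); rewrite ltrBlDr ltrDl.
  by rewrite ltr_pM2l.
have h1 : 1 - y <= expR (- y) by have := expR_ge1Dx (- y).
have hpos : 0 < 1 - y by rewrite subr_gt0.
apply: (@le_trans _ _ (1 - y)^-1).
  rewrite -[expR y]invrK -expRN lef_pV2 ?posrE ?expR_gt0 //.
rewrite -(ler_pM2l hpos) mulfV ?gt_eqF //.
have : 0 <= y ^+ 2 * (g - 1 - g * y) by rewrite mulr_ge0 ?sqr_ge0 // subr_ge0.
by move=> H; rewrite -subr_ge0; apply: le_trans H _; rewrite le_eqVlt; apply/orP; left; apply/eqP; ring.
Qed.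

Lemma prod_cosh n (a : 'I_n -> R) :
  \prod_(i < n) ((expR (a i) + expR (- a i)) / 2) =
  \sum_(sg : {ffun 'I_n -> bool})
     expR (\sum_(i < n) (if sg i then 1 else -1) * a i) * (2^-1) ^+ n.
Proof.
transitivity (\prod_(i < n) \sum_(b : bool) expR ((if b then 1 else -1) * a i) / 2).
  by apply: eq_bigr => i _; rewrite big_bool /= mul1r mulN1r mulrDl.
rewrite bigA_distr_bigA; apply: eq_bigr => sg _.
by rewrite big_split /= expR_sum prodr_const card_ord.
Qed.

Lemma prod_cosh_lb n (a : 'I_n -> R) (T : R) :
  1 <= T -> (12 * T) ^+ 2 <= \sum_(i < n) a i ^+ 2 ->
  expR (8 * T) <= \prod_(i < n) ((expR (a i) + expR (- a i)) / 2).
Proof.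
move=> T1 hS.
set S := \sum_(i < n) a i ^+ 2.
have S0 : 0 <= S by apply: sumr_ge0 => i _; apply: sqr_ge0.
set N := Num.sqrt S.
have N0 : 0 <= N by apply: sqrtr_ge0.
have NS : N ^+ 2 = S by apply: sqr_sqrtr.
apply: (@le_trans _ _ (expR (\sum_(i < n) a i ^+ 2 / (5 + `|a i|)))); last first.
  rewrite expR_sum; apply: ler_prod => i _; rewrite expR_ge0 /=; exact: cosh_lb.
rewrite ler_expR.
have hN : forall i, `|a i| <= N.
  move=> i; rewrite /N -sqrtr_sqr ler_wsqrtr // /S (bigD1 i) //= lerDl.
  by apply: sumr_ge0 => j _; apply: sqr_ge0.
have N5 : 0 < 5 + N by lra.
apply: (@le_trans _ _ (S / (5 + N))); last first.
  rewrite /S mulr_suml; apply: ler_sum => i _; apply: ler_wpM2l; first exact: sqr_ge0.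
  rewrite lef_pV2 ?posrE ?lerD2l //; have := normr_ge0 (a i); lra.
have N12 : 12 * T <= N by rewrite -ler_sqr ?nnegrE // ?NS //; lra.
rewrite ler_pdivlMr // -NS.
have h1 : 0 <= (N - 12 * T) * (N + 4 * T) by apply: mulr_ge0; lra.
have h2 : 0 <= T * (T - 1) by apply: mulr_ge0; lra.
nra.
Qed.
End Aux.

Section Prob.
Variables (R : realType) (U : finType) (q : U -> R).
Hypothesis hq0 : forall u, 0 <= q u.
Hypothesis hq1 : \sum_(u : U) q u = 1.
Variable m : nat.

Definition Wt (x : {ffun 'I_m -> U}) : R := \prod_(j < m) q (x j).

Lemma Wt_ge0 x : 0 <= Wt x.
Proof. by apply: prodr_ge0 => j _; apply: hq0. Qed.

Lemma mgf (f : U -> R) :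
  \sum_(x : {ffun 'I_m -> U}) Wt x * expR (\sum_(j < m) f (x j)) =
  (\sum_(u : U) q u * expR (f u)) ^+ m.
Proof.
rewrite -[in RHS](card_ord m) -[RHS]prodr_const.
rewrite (bigA_distr_bigA (fun (_ : 'I_m) u => q u * expR (f u))).
apply: eq_bigr => x _.
by rewrite /Wt expR_sum -big_split.
Qed.

Lemma sumWt : \sum_(x : {ffun 'I_m -> U}) Wt x = 1.
Proof.
transitivity (\sum_(x : {ffun 'I_m -> U}) Wt x * expR (\sum_(j < m) (fun _ : U => (0:R)) (x j))).
  by apply: eq_bigr => x _; rewrite big1_eq expR0 mulr1.
etransitivity; first exact: (mgf (fun _ : U => (0:R))).
under eq_bigr do rewrite expR0 mulr1.
by rewrite hq1 expr1n.
Qed.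

Lemma prob_lower (E : pred {ffun 'I_m -> U}) (w : {ffun 'I_m -> U} -> R) :
  (forall x, 0 <= w x) -> (forall x, ~~ E x -> 1 <= w x) ->
  1 - \sum_x Wt x * w x <= prodprob q E.
Proof.
move=> w0 w1.
rewrite /prodprob -/(Wt _) lerBlDr -{1}sumWt (bigID E) /= lerD2l.
apply: (@le_trans _ _ (\sum_(x | ~~ E x) Wt x * w x)).
  apply: ler_sum => x hx; rewrite -{1}[Wt x]mulr1 ler_wpM2l ?Wt_ge0 //; exact: w1.
rewrite [X in _ <= X](bigID (fun x => ~~ E x)) /= lerDl.
by apply: sumr_ge0 => x _; apply: mulr_ge0 => //; apply: Wt_ge0.
Qed.

Lemma mgf_bound (g : U -> R) (ga la : R) :
  let b := \sum_(u : U) q u * g u in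
  1 < ga -> (forall u, ga * (la * (g u - b)) <= ga - 1) ->
  \sum_(u : U) q u * expR (la * (g u - b)) <=
  expR (ga * la ^+ 2 * \sum_(u : U) q u * g u ^+ 2).
Proof.
move=> b g1 hg.
have hb : \sum_(u : U) q u * g u = b by [].
clearbody b.
apply: (@le_trans _ _ (\sum_(u : U) q u * (1 + la * (g u - b) + ga * (la * (g u - b)) ^+ 2))).
  by apply: ler_sum => u _; apply: ler_wpM2l => //; apply: expR_quad.
have -> : \sum_(u : U) q u * (1 + la * (g u - b) + ga * (la * (g u - b)) ^+ 2) =
  (1 - la * b + ga * la ^+ 2 * b ^+ 2) * \sum_u q u + (la - 2 * ga * la ^+ 2 * b) * \sum_u q u * g u
  + ga * la ^+ 2 * \sum_u q u * g u ^+ 2.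
  rewrite !mulr_sumr -!big_split /=; apply: eq_bigr => u _; ring.
rewrite hq1 hb.
set S2 := \sum_u q u * g u ^+ 2.
have hS2 : 0 <= S2 by apply: sumr_ge0 => u _; apply: mulr_ge0 => //; apply: sqr_ge0.
have gl : 0 <= ga * la ^+ 2 by apply: mulr_ge0; [apply: ltW; apply: lt_trans g1|apply: sqr_ge0].
apply: le_trans (expR_ge1Dx _).
have : 0 <= ga * la ^+ 2 * b ^+ 2 by apply: mulr_ge0 => //; apply: sqr_ge0.
have -> : (1 - la * b + ga * la ^+ 2 * b ^+ 2) * 1 + (la - 2 * ga * la ^+ 2 * b) * b + ga * la ^+ 2 * S2
   = 1 + ga * la ^+ 2 * S2 - ga * la ^+ 2 * b ^+ 2 by ring.
lra.
Qed.


Lemma tail_gen (g : U -> R) (ga la K : R) :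
  let b := \sum_(u : U) q u * g u in
  1 < ga -> (forall u, ga * (la * (g u - b)) <= ga - 1) ->
  \sum_(x : {ffun 'I_m -> U}) Wt x * expR (la * \sum_(j < m) (g (x j) - b) - K) <=
  expR (m%:R * (ga * la ^+ 2 * \sum_(u : U) q u * g u ^+ 2) - K).
Proof.
move=> b g1 hg.
rewrite (_ : \sum_(x : {ffun 'I_m -> U}) Wt x * expR (la * \sum_(j < m) (g (x j) - b) - K) = (\sum_(x : {ffun 'I_m -> U}) Wt x * expR (\sum_(j < m) (fun u => la * (g u - b)) (x j))) * expR (- K)); last first.
  by rewrite mulr_suml; apply: eq_bigr => x _; rewrite -mulrA -expRD mulr_sumr.
rewrite (mgf (fun u => la * (g u - b))) expRD expRM_natl ler_wpM2r ?expR_ge0 //.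
apply: lerXn2r; rewrite ?nnegrE ?expR_ge0 //.
  by apply: sumr_ge0 => u _; apply: mulr_ge0 => //; apply: expR_ge0.
exact: mgf_bound.
Qed.

End Prob.

Section Hash.
Variables (R : realType) (U : finType) (q : U -> R).
Hypothesis hq0 : forall u, 0 <= q u.
Hypothesis hq1 : \sum_(u : U) q u = 1.
Variables (n : nat) (h : U -> 'I_n).

Lemma sum_part (g : 'I_n -> R) :
  \sum_(u : U) q u * g (h u) = \sum_(i < n) pmass q h i * g i.
Proof.
rewrite (partition_big h xpredT) //=; apply: eq_bigr => i _.
rewrite /pmass mulr_suml; apply: eq_bigr => u /eqP -> //.
Qed.

Lemma pmass_ge0 i : 0 <= pmass q h i.
Proof. by apply: sumr_ge0 => u _; apply: hq0. Qed.

Lemma sum_pmass : \sum_(i < n) pmass q h i = 1.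
Proof.
rewrite -hq1; transitivity (\sum_(i < n) pmass q h i * 1).
  by apply: eq_bigr => i _; rewrite mulr1.
rewrite -(sum_part (fun _ => 1)).
by apply: eq_bigr => u _; rewrite mulr1.
Qed.

Lemma kcount_sum m (c : 'I_n -> R) (x : {ffun 'I_m -> U}) :
  \sum_(i < n) c i * (kcount h x i)%:R = \sum_(j < m) c (h (x j)).
Proof.
symmetry; rewrite (partition_big (fun j => h (x j)) xpredT) //=.
apply: eq_bigr => i _.
rewrite (eq_bigr (fun _ => c i)); last by move=> j /eqP ->.
rewrite (eq_bigl (fun j => j \in [set j | h (x j) == i])); last by move=> j; rewrite inE.
by rewrite sumr_const mulr_natr.
Qed.

End Hash.

Lemma basics (R : realType) (U : finType) (q : U -> R)
    (hq0 : forall u, 0 <= q u) (hq1 : \sum_(u : U) q u = 1)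
    (n : nat) (hn : (24 < n)%N) (h : U -> 'I_n) :
  let p := pmass q h in let mu := pnorm2 q h in
  [/\ 1 <= n%:R * mu, mu <= 1, 0 < mu,
      (forall i, p i ^+ 2 <= mu) &
      \sum_(u : U) q u * p (h u) = mu].
Proof.
move=> p mu.
have n0 : 0 < n%:R :> R by rewrite ltr0n; apply: leq_ltn_trans hn.
have p0 i : 0 <= p i by apply: pmass_ge0.
have sp : \sum_(i < n) p i = 1 by apply: sum_pmass.
have pi2 i : p i ^+ 2 <= mu.
  by rewrite /mu /pnorm2 (bigD1 i) //= lerDl; apply: sumr_ge0 => j _; apply: sqr_ge0.
have p1 i : p i <= 1.
  by rewrite -sp (bigD1 i) //= lerDl; apply: sumr_ge0 => j _.
have mu1 : mu <= 1.
  rewrite -sp /mu /pnorm2; apply: ler_sum => i _; rewrite expr2.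
  by rewrite -[X in _ <= X]mulr1 ler_wpM2l.
have E : \sum_(i < n) (p i - n%:R^-1) ^+ 2 = mu - n%:R^-1.
  transitivity (\sum_(i < n) (p i ^+ 2 + ((- 2 * n%:R^-1) * p i + n%:R^-1 ^+ 2))).
    by apply: eq_bigr => i _; ring.
  rewrite big_split big_split /= -mulr_sumr sp sumr_const card_ord -mulr_natr.
  by rewrite /mu /pnorm2; field; rewrite gt_eqF.
have hmu : 0 <= mu - n%:R^-1 by rewrite -E; apply: sumr_ge0 => i _; apply: sqr_ge0.
have nmu : 1 <= n%:R * mu.
  have : n%:R * n%:R^-1 = 1 :> R by rewrite mulfV // gt_eqF.
  have : 0 <= n%:R * (mu - n%:R^-1) by apply: mulr_ge0 => //; apply: ltW.
  rewrite mulrBr; lra.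
split => //.
- rewrite lt_neqAle; apply/andP; split.
    by apply/eqP => mu0; move: nmu; rewrite -mu0 mulr0; lra.
  by apply: sumr_ge0 => i _; apply: sqr_ge0.
- rewrite (@sum_part _ _ q _ h p) /mu /pnorm2; apply: eq_bigr => i _; by rewrite expr2.
Qed.

Lemma natk (R : realType) (c : nat) : ((c * (c - 1))%:R : R) = c%:R * (c%:R - 1).
Proof.
case: c => [|c]; first by rewrite mul0n !mul0r.
by rewrite natrM subn1 /= -addn1 natrD addrK.
Qed.

Lemma count_ident (R : realType) (U : finType) (q : U -> R)
    (hq0 : forall u, 0 <= q u) (hq1 : \sum_(u : U) q u = 1)
    (n : nat) (h : U -> 'I_n) (m : nat) (x : {ffun 'I_m -> U}) :
  let p := pmass q h in let mu := pnorm2 q h in let mR := (m%:R : R) in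
  \sum_(i < n) ((kcount h x i * (kcount h x i - 1))%:R : R) =
  \sum_(i < n) ((kcount h x i)%:R - mR * p i) ^+ 2
  + 2 * mR * \sum_(j < m) (p (h (x j)) - mu) + mR ^+ 2 * mu - mR.
Proof.
move=> p mu mR.
set k := fun i => (kcount h x i)%:R : R.
have K1 : \sum_(i < n) k i = mR.
  transitivity (\sum_(i < n) (fun _ => (1:R)) i * k i).
    by apply: eq_bigr => i _; rewrite mul1r.
  by rewrite /k kcount_sum sumr_const card_ord.
have KP : \sum_(i < n) p i * k i = \sum_(j < m) p (h (x j)) by rewrite /k kcount_sum.
have L : \sum_(i < n) ((kcount h x i * (kcount h x i - 1))%:R : R) =
   \sum_(i < n) k i ^+ 2 - \sum_(i < n) k i.
  by rewrite -sumrB; apply: eq_bigr => i _; rewrite natk /k; ring.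
have Qe : \sum_(i < n) (k i - mR * p i) ^+ 2 =
    \sum_(i < n) k i ^+ 2 - 2 * mR * \sum_(i < n) p i * k i + mR ^+ 2 * mu.
  transitivity (\sum_(i < n) (k i ^+ 2 + ((- (2 * mR)) * (p i * k i) + mR ^+ 2 * p i ^+ 2))).
    by apply: eq_bigr => i _; ring.
  rewrite big_split big_split /= -!mulr_sumr /mu /pnorm2 -/p; ring.
have De : \sum_(j < m) (p (h (x j)) - mu) = \sum_(j < m) p (h (x j)) - mR * mu.
  by rewrite sumrB sumr_const card_ord mulr_natl.
rewrite L -/k Qe De K1 -KP; ring.
Qed.

Lemma final_ineq (R : realType) (X Q Dv mR mu eps t n : R) :
  X = Q + 2 * mR * Dv + mR ^+ 2 * mu - mR ->
  0 <= Q -> Q < 36 * mR * t -> Dv < 19/5 * eps * mR * mu -> - Dv < 19/5 * eps * mR * mu ->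
  0 < eps -> eps < 1/3 -> 0 < mu -> mu <= 1 -> 1 <= n * mu -> 1 <= t ->
  eps ^+ 2 * mR = n * t -> 10 <= mR ->
  `| X / (mR * (mR - 1)) * mu^-1 - 1 | <= 22 * eps.
Proof.
move=> hX Q0 hQ hD1 hD2 e0 e1 mu0 mu1 nmu t1 hmt m10.
have m0 : 0 < mR by lra.
have Dn0 : 0 < mR * (mR - 1) * mu by apply: mulr_gt0 => //; apply: mulr_gt0; lra.
have -> : X / (mR * (mR - 1)) * mu^-1 - 1 = (X - mR * (mR - 1) * mu) / (mR * (mR - 1) * mu).
  by field; rewrite !gt_eqF //; lra.
have Z0 : 0 <= eps * mR * mu by apply: mulr_ge0; [apply: mulr_ge0|]; lra.
have eZ : eps * (eps * mR * mu) = (n * mu) * t.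
  by rewrite (_ : eps * (eps * mR * mu) = (eps ^+ 2 * mR) * mu); [rewrite hmt; ring | ring].
have ht : t <= eps * (eps * mR * mu).
  rewrite eZ -[X in X <= _]mul1r ler_wpM2r //; lra.
have h1 : 1 <= eps * (eps * mR * mu).
  rewrite eZ; have : n * mu <= n * mu * t by rewrite -[X in X <= _]mulr1 ler_wpM2l //; lra.
  lra.
have hZ3 : eps * (eps * mR * mu) <= (eps * mR * mu) / 3.
  have : eps * (eps * mR * mu) <= (1/3) * (eps * mR * mu) by apply: ler_wpM2r => //; lra.
  lra.
have p1 : mR * t <= mR * ((eps * mR * mu) / 3) by apply: ler_wpM2l; lra.
have p2 : mR * 1 <= mR * ((eps * mR * mu) / 3) by apply: ler_wpM2l; lra.
have p3 : mR * Dv <= mR * (19/5 * eps * mR * mu) by apply: ler_wpM2l; lra.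
have p4 : mR * (- Dv) <= mR * (19/5 * eps * mR * mu) by apply: ler_wpM2l; lra.
have p5 : mR * mu <= mR * 1 by apply: ler_wpM2l; lra.
have p6 : 0 <= (mR - 10) * (eps * mR * mu) by apply: mulr_ge0; lra.
rewrite ler_norml ler_pdivrMr // ler_pdivlMr //; apply/andP; split.
  rewrite hX; nra.
rewrite hX; nra.
Qed.

Lemma lin_tail (R : realType) (U : finType) (q : U -> R)
    (hq0 : forall u, 0 <= q u) (hq1 : \sum_(u : U) q u = 1)
    (m : nat) (n eps t mu r la : R) (g : U -> R) :
  0 < eps -> eps <= 1/3 -> 0 < r -> r ^+ 2 = mu -> la = eps / r ->
  1 <= n * mu -> mu <= 1 -> eps ^+ 2 * m%:R = n * t -> 0 <= t ->
  (forall u, la * (g u - \sum_(v : U) q v * g v) <= eps) ->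
  \sum_(u : U) q u * g u ^+ 2 <= r * mu ->
  \sum_(x : {ffun 'I_m -> U}) @Wt R U q m x *
     expR (la * \sum_(j < m) (g (x j) - \sum_(v : U) q v * g v) - la * (19/5 * eps * m%:R * mu))
  <= expR (- (23/10 * t)).
Proof.
move=> e0 e1 r0 r2 hla nmu mu1 hmt t0 hg hS2.
apply: le_trans (@tail_gen R U q hq0 hq1 m g (3/2) la _ _ _) _.
- lra.
- by move=> u; have := hg u; lra.
rewrite ler_expR.
set S2 := \sum_(u : U) q u * g u ^+ 2 in hS2 *.
set mR := (m%:R : R) in hmt *.
have mR0 : 0 <= mR by rewrite /mR ler0n.
have F1 : la ^+ 2 * (r * mu) = eps ^+ 2 * r by rewrite hla -r2; field; rewrite gt_eqF.
have F2 : la * (19/5 * eps * mR * mu) = 19/5 * (eps ^+ 2 * mR) * r.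
  by rewrite hla -r2; field; rewrite gt_eqF.
have F3 : la ^+ 2 * S2 <= la ^+ 2 * (r * mu) by apply: ler_wpM2l => //; apply: sqr_ge0.
have F4 : mR * (la ^+ 2 * S2) <= mR * (eps ^+ 2 * r) by rewrite -F1; apply: ler_wpM2l.
have r1 : r <= 1.
  have : r ^+ 2 <= 1 by rewrite r2.
  rewrite expr2 => h1; nra.
have rmu : mu <= r by rewrite -r2 expr2 -[X in _ <= X]mulr1; apply: ler_wpM2l => //; lra.
have nr : 1 <= n * r.
  have mu0 : 0 < mu by rewrite -r2 exprn_gt0.
  have n0 : 0 <= n.
    rewrite leNgt; apply/negP => hn; have : n * mu < 0 by rewrite pmulr_llt0.
    lra.
  have : n * mu <= n * r by apply: ler_wpM2l.
  lra.
have F5 : t * 1 <= t * (n * r) by apply: ler_wpM2l.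
rewrite F2 hmt.
have F6 : mR * (eps ^+ 2 * r) = n * t * r by rewrite mulrA [mR * _]mulrC hmt.
rewrite F6 in F4.
lra.
Qed.

Lemma sg_bound (R : realType) (U : finType) (q : U -> R)
    (hq0 : forall u, 0 <= q u) (hq1 : \sum_(u : U) q u = 1) (g : U -> R) :
  (forall u, g u = 1 \/ g u = -1) ->
  (forall u, g u - \sum_(v : U) q v * g v <= 2) /\ \sum_(u : U) q u * g u ^+ 2 = 1.
Proof.
move=> hg; split.
  move=> u.
  have : - 1 <= \sum_(v : U) q v * g v.
    rewrite -hq1 -sumrN; apply: ler_sum => v _; rewrite -mulrN1 ler_wpM2l //.
    by case: (hg v) => ->; lra.
  by case: (hg u) => ->; lra.
rewrite -hq1; apply: eq_bigr => u _; case: (hg u) => ->; rewrite ?sqrrN expr1n mulr1 //.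
Qed.

Lemma quad_tail (R : realType) (U : finType) (q : U -> R)
    (hq0 : forall u, 0 <= q u) (hq1 : \sum_(u : U) q u = 1)
    (n : nat) (h : U -> 'I_n) (m : nat) (s t : R) :
  0 <= s -> s <= 1/7 -> s ^+ 2 * m%:R = 4 * t ->
  \sum_(x : {ffun 'I_m -> U}) @Wt R U q m x *
    (expR (- (8 * t)) * \prod_(i < n)
       ((expR (s * ((kcount h x i)%:R - m%:R * pmass q h i)) +
         expR (- (s * ((kcount h x i)%:R - m%:R * pmass q h i)))) / 2))
  <= expR (- (12/5 * t)).
Proof.
move=> s0 s17 hs.
pose sg (b : bool) : R := if b then 1 else -1.
have key : forall sgm : {ffun 'I_n -> bool},
  \sum_(x : {ffun 'I_m -> U}) @Wt R U q m x *
     expR (\sum_(i < n) sg (sgm i) * (s * ((kcount h x i)%:R - m%:R * pmass q h i)))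
  <= expR (28/5 * t).
  move=> sgm.
  pose g u := sg (sgm (h u)).
  have hg u : g u = 1 \/ g u = -1 by rewrite /g /sg; case: (sgm (h u)); [left|right].
  have [gb g2] := @sg_bound R U q hq0 hq1 g hg.
  have eqx : forall x : {ffun 'I_m -> U},
      \sum_(i < n) sg (sgm i) * (s * ((kcount h x i)%:R - m%:R * pmass q h i)) =
      s * \sum_(j < m) (g (x j) - \sum_(v : U) q v * g v) - 0.
    move=> x; rewrite subr0.
    have e1 := @kcount_sum R U n h m (fun i => sg (sgm i)) x.
    have e2 := @sum_part R U q n h (fun i => sg (sgm i)).
    rewrite sumrB sumr_const card_ord /g e2 -e1 -[in RHS]mulr_natr mulr_suml -sumrB mulr_sumr.
    apply: eq_bigr => i _; ring.
  under eq_bigr do rewrite eqx.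
  apply: le_trans (@tail_gen R U q hq0 hq1 m g (7/5) s 0 _ _) _.
  - lra.
  - move=> u; have := gb u => H.
    have : s * (g u - \sum_(v : U) q v * g v) <= s * 2 by apply: ler_wpM2l.
    lra.
  rewrite g2 subr0 ler_expR mulr1.
  have -> : m%:R * (7/5 * s ^+ 2) = 7/5 * (s ^+ 2 * m%:R) by ring.
  rewrite hs; lra.
pose F (sgm : {ffun 'I_n -> bool}) (x : {ffun 'I_m -> U}) :=
  expR (\sum_(i < n) sg (sgm i) * (s * ((kcount h x i)%:R - m%:R * pmass q h i))).
pose c : R := expR (- (8 * t)) * (2^-1) ^+ n.
have c0 : 0 <= c by rewrite /c; apply: mulr_ge0; [apply: expR_ge0 | apply: exprn_ge0; rewrite invr_ge0].
rewrite (eq_bigr (fun x => c * \sum_(sgm : {ffun 'I_n -> bool}) @Wt R U q m x * F sgm x)); last first.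
  move=> x _.
  rewrite (@prod_cosh R n (fun i => s * ((kcount h x i)%:R - m%:R * pmass q h i))).
  rewrite [in LHS]mulr_sumr [in LHS]mulr_sumr [in RHS]mulr_sumr.
  by apply: eq_bigr => sgm _; rewrite /c /F /sg; ring.
rewrite -mulr_sumr exchange_big /=.
apply: (@le_trans _ _ (c * \sum_(sgm : {ffun 'I_n -> bool}) expR (28/5 * t))).
  by apply: ler_wpM2l => //; apply: ler_sum => sgm _; apply: key.
rewrite sumr_const card_ffun card_bool card_ord /c -[_ *+ (2 ^ n)%N]mulr_natr natrX.
have -> : expR (- (8 * t)) * 2^-1 ^+ n * (expR (28 / 5 * t) * 2%:R ^+ n) =
          expR (- (8 * t)) * expR (28 / 5 * t) * (2^-1 * 2%:R) ^+ n by rewrite exprMn; ring.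
rewrite mulVf ?pnatr_eq0 // expr1n mulr1 -expRD ler_expR; lra.
Qed.

Lemma exp_final (R : realType) (t : R) : 1 <= t ->
  2 * expR (- (23/10 * t)) + expR (- (12/5 * t)) <= 10/9 * expR (- t).
Proof.
move=> t1.
have a1 : expR (- (12/5 * t)) <= expR (- (23/10 * t)) by rewrite ler_expR; lra.
have a2 : expR (- (23/10 * t)) = expR (- t) * expR (- (13/10 * t)) by rewrite -expRD; congr expR; field.
move: a1 a2; set y : R := 13/10 => a1 a2.
have y0 : y = 13/10 by [].
have a3 : expR (- (y * t)) <= expR (- y).
  rewrite ler_expR; have : y * 1 <= y * t by apply: ler_wpM2l; lra.
  lra.
have a4 := @expR_sq_half R y ltac:(lra).
have a5 : expR (- y) * expR y = 1 by rewrite -expRD addNr expR0.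
have a6 := expR_ge0 (- t).
have a7 := expR_ge0 (- y).
clearbody y.
set A := expR (- (12/5 * t)) in a1 *.
set C := expR (- t) in a2 a6 *.
set D := expR (- (y * t)) in a2 a3 *.
set B := expR (- (23/10 * t)) in a1 a2 *.
set E := expR (- y) in a3 a5 a7 *.
set F := expR y in a4 a5 *.
clearbody A B C D E F.
rewrite a2 in a1 *.
rewrite y0 in a4.
have hE : E <= 400/1089.
  have : E * (1 + 13 / 10 / 2) ^+ 2 <= E * F by apply: ler_wpM2l.
  rewrite a5; lra.
have : C * D <= C * (400/1089) by apply: ler_wpM2l => //; lra.
lra.
Qed.

Lemma w3_lb (R : realType) (n : nat) (v : 'I_n -> R) (mR s t : R) :
  1 <= t -> 0 <= s -> s ^+ 2 * mR = 4 * t ->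
  36 * mR * t <= \sum_(i < n) v i ^+ 2 ->
  1 <= expR (- (8 * t)) * \prod_(i < n) ((expR (s * v i) + expR (- (s * v i))) / 2).
Proof.
move=> t1 s0 hs hQ.
have := @prod_cosh_lb R n (fun i => s * v i) t t1.
have HS : \sum_(i < n) (s * v i) ^+ 2 = s ^+ 2 * \sum_(i < n) v i ^+ 2.
  by rewrite mulr_sumr; apply: eq_bigr => i _; rewrite exprMn.
rewrite HS.
have : s ^+ 2 * (36 * mR * t) <= s ^+ 2 * \sum_(i < n) v i ^+ 2 by apply: ler_wpM2l => //; apply: sqr_ge0.
have -> : s ^+ 2 * (36 * mR * t) = 36 * t * (s ^+ 2 * mR) by ring.
rewrite hs => H1 H2.
have := H2 ltac:(lra).
have e : expR (- (8 * t)) * expR (8 * t) = 1 by rewrite -expRD addNr expR0.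
have e0 := expR_ge0 (- (8 * t)).
move=> H3.
have : expR (- (8 * t)) * expR (8 * t) <= expR (- (8 * t)) * \prod_(i < n) ((expR (s * v i) + expR (- (s * v i))) / 2).
  by apply: ler_wpM2l.
by rewrite e.
Qed.

Theorem corollary1 (R : realType) (U : finType) (q : U -> R)
    (hq0 : forall u, 0 <= q u) (hq1 : \sum_(u : U) q u = 1)
    (n : nat) (hn : (24 < n)%N) (h : U -> 'I_n)
    (eps delta : R) (heps0 : 0 < eps) (heps1 : eps < 1 / 3) (hdelta : 0 < delta)
    (m : nat) (hm : m%:R = eps ^-2 * powR n%:R (1 + delta)) :
  1 - 10 / 9 * expR (- powR n%:R delta) <=
  prodprob q (fun x : {ffun 'I_m -> U} =>
    `| \sum_(i < n) ((kcount h x i * (kcount h x i - 1))%:R / (m%:R * (m%:R - 1)))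
         * (pnorm2 q h)^-1 - 1 | <= 22 * eps).
Proof.
have [nmu mu1 mu0 pi2 EY] := @basics R U q hq0 hq1 n hn h.
set mu := pnorm2 q h in nmu mu1 mu0 pi2 EY *.
set t := powR n%:R delta.
set mR := (m%:R : R) in hm *.
have mR0 : 0 <= mR by rewrite /mR ler0n.
have n25 : (25 : R) <= n%:R by rewrite ler_nat.
have t1 : 1 <= t.
  by rewrite /t -[X in X <= _](powRr0 n%:R); apply: ler_powR; [lra | exact: ltW].
have t0 : 0 <= t by lra.
have hmt : eps ^+ 2 * mR = n%:R * t.
  rewrite hm powRD; last by apply/implyP => _; rewrite pnatr_eq0 -lt0n (leq_trans _ hn).
  by rewrite powRr1 ?ler0n // mulrA mulfV ?mul1r // expf_neq0 // gt_eqF.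
have e2 : eps ^+ 2 <= 1/9.
  have : eps * eps <= (1/3) * (1/3) by apply: ler_pM; lra.
  rewrite expr2; lra.
have mRt : 225 * t <= mR.
  have : eps ^+ 2 * mR <= (1/9) * mR by apply: ler_wpM2r.
  have : 25 * t <= n%:R * t by apply: ler_wpM2r.
  lra.
have m225 : 225 <= mR by lra.
set r := Num.sqrt mu.
have r0 : 0 < r by rewrite sqrtr_gt0.
have r2 : r ^+ 2 = mu by rewrite sqr_sqrtr // ltW.
have r1 : r <= 1.
  have : r ^+ 2 <= 1 by rewrite r2.
  rewrite expr2 => H; nra.
have mur : mu <= r by rewrite -r2 expr2 -[X in _ <= X]mulr1; apply: ler_wpM2l => //; lra.
have p0 i : 0 <= pmass q h i by apply: pmass_ge0.
have pr i : pmass q h i <= r.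
  by rewrite -ler_sqr ?nnegrE ?r2 //; apply: ltW.
set la := eps / r.
have la0 : 0 < la by rewrite /la divr_gt0.
have lar : la * r = eps by rewrite /la divfK // gt_eqF.
pose g1 := fun u => pmass q h (h u).
pose g2 := fun u => - pmass q h (h u).
have Eg1 : \sum_(v : U) q v * g1 v = mu := EY.
have Eg2 : \sum_(v : U) q v * g2 v = - mu.
  by rewrite -EY -sumrN; apply: eq_bigr => v _; rewrite /g2 mulrN.
have S1 : \sum_(u : U) q u * g1 u ^+ 2 <= r * mu.
  rewrite -EY mulr_sumr; apply: ler_sum => u _; rewrite (mulrCA r); apply: ler_wpM2l => //.
  by rewrite /g1 expr2; apply: ler_wpM2r.
have S2 : \sum_(u : U) q u * g2 u ^+ 2 <= r * mu.
  by apply: le_trans S1; apply: ler_sum => u _; rewrite /g1 /g2 sqrrN.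
pose c := 19/5 * eps * mR * mu.
have E1 := @lin_tail R U q hq0 hq1 m n%:R eps t mu r la g1 heps0 (ltW heps1) r0 r2 erefl nmu mu1 hmt t0.
have E2 := @lin_tail R U q hq0 hq1 m n%:R eps t mu r la g2 heps0 (ltW heps1) r0 r2 erefl nmu mu1 hmt t0.
have {E1}E1 : \sum_(x : {ffun 'I_m -> U}) @Wt R U q m x *
     expR (la * \sum_(j < m) (g1 (x j) - \sum_(v : U) q v * g1 v) - la * c)
  <= expR (- (23/10 * t)).
  apply: E1 => //; move=> u; rewrite Eg1 -lar; apply: ler_wpM2l; first exact: ltW.
  by have := pr (h u); have := p0 (h u); rewrite /g1; lra.
have {E2}E2 : \sum_(x : {ffun 'I_m -> U}) @Wt R U q m x *
     expR (la * \sum_(j < m) (g2 (x j) - \sum_(v : U) q v * g2 v) - la * c)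
  <= expR (- (23/10 * t)).
  apply: E2 => //; move=> u; rewrite Eg2 -lar; apply: ler_wpM2l; first exact: ltW.
  by have := p0 (h u); rewrite /g2; lra.
set s := Num.sqrt (4 * t / mR).
have mRpos : 0 < mR by lra.
have s0 : 0 <= s by apply: sqrtr_ge0.
have s2 : s ^+ 2 = 4 * t / mR by rewrite sqr_sqrtr // divr_ge0 //; lra.
have hs : s ^+ 2 * mR = 4 * t by rewrite s2 divfK // gt_eqF.
have s17 : s <= 1/7.
  rewrite -ler_sqr ?nnegrE //; last lra.
  have : s ^+ 2 * mR <= (1/7) ^+ 2 * mR by rewrite hs; lra.
  by rewrite ler_pM2r.
have E3 := @quad_tail R U q hq0 hq1 n h m s t s0 s17 hs.
pose v (x : {ffun 'I_m -> U}) i := (kcount h x i)%:R - mR * pmass q h i.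
pose w1 x := expR (la * \sum_(j < m) (g1 (x j) - \sum_(v : U) q v * g1 v) - la * c).
pose w2 x := expR (la * \sum_(j < m) (g2 (x j) - \sum_(v : U) q v * g2 v) - la * c).
pose w3 x := expR (- (8 * t)) * \prod_(i < n) ((expR (s * v x i) + expR (- (s * v x i))) / 2).
have w3ge0 x : 0 <= w3 x.
  apply: mulr_ge0; first exact: expR_ge0.
  apply: prodr_ge0 => i _; apply: divr_ge0 => //; apply: addr_ge0; apply: expR_ge0.
apply: le_trans (@prob_lower R U q hq0 hq1 m _ (fun x => w1 x + w2 x + w3 x) _ _).
- apply: lerB => //.
  rewrite (eq_bigr (fun x => @Wt R U q m x * w1 x + @Wt R U q m x * w2 x + @Wt R U q m x * w3 x)); last first.
    by move=> x _; rewrite !mulrDr.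
  rewrite !big_split /=.
  apply: le_trans (@exp_final R t t1).
  have two (y : R) : 2 * y = y + y by ring.
  rewrite two.
  by apply: lerD; [apply: lerD|].
- by move=> x; apply: addr_ge0; [apply: addr_ge0; apply: expR_ge0|].
move=> x hE; rewrite leNgt; apply/negP => hW; move/negP: hE; apply.
have w1ge0 := expR_ge0 (la * \sum_(j < m) (g1 (x j) - \sum_(v : U) q v * g1 v) - la * c).
have w2ge0 := expR_ge0 (la * \sum_(j < m) (g2 (x j) - \sum_(v : U) q v * g2 v) - la * c).
have hw1 : w1 x < 1.
  apply: le_lt_trans hW; rewrite -addrA lerDl; apply: addr_ge0 => //.
have hw2 : w2 x < 1.
  apply: le_lt_trans hW; apply: (@le_trans _ _ (w1 x + w2 x)).
    by rewrite lerDr.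
  by rewrite lerDl.
have hw3 : w3 x < 1.
  by apply: le_lt_trans hW; rewrite lerDr; apply: addr_ge0.
rewrite /w1 expR_lt1 subr_lt0 ltr_pM2l // Eg1 in hw1.
rewrite /w2 expR_lt1 subr_lt0 ltr_pM2l // Eg2 in hw2.
have hD2 : - \sum_(j < m) (pmass q h (h (x j)) - mu) < c.
  have eq2 : \sum_(j < m) (g2 (x j) - - mu) = \sum_(j < m) - (pmass q h (h (x j)) - mu).
    by apply: eq_bigr => j _; rewrite /g2 opprB opprK addrC.
  by rewrite sumrN in eq2; rewrite -eq2.
have hQ : \sum_(i < n) v x i ^+ 2 < 36 * mR * t.
  rewrite ltNge; apply/negP => hQ.
  have := @w3_lb R n (v x) mR s t t1 s0 hs hQ.
  by rewrite leNgt hw3.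
rewrite -!mulr_suml.
apply: (@final_ineq R _ (\sum_(i < n) v x i ^+ 2) (\sum_(j < m) (pmass q h (h (x j)) - mu)) mR mu eps t n%:R).
- exact: (@count_ident R U q hq0 hq1 n h m x).
- by apply: sumr_ge0 => i _; apply: sqr_ge0.
- exact: hQ.
- exact: hw1.
- exact: hD2.
- exact: heps0.
- exact: heps1.
- exact: mu0.
- exact: mu1.
- exact: nmu.
- exact: t1.
- exact: hmt.
- lra.
Qed.
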